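(* Let $X$ be a countable discrete metric space and $d\in D(X,X)$ such that the identity operator of $l^2(X)$ belongs to $M_d(X,X)$. Then $d$ and $d^0$ are almost isometric, i.e. there is $K\ge0$ with $|d(x_1,x_2')-d^0(x_1,x_2')|\le K$ for all $x_1,x_2\in X$.
   Context: $D(X,X)$ is the set of metrics on $X\sqcup X'$, where $X'=\{x':x\in X\}$ is a second copy of $X$, restricting to $d_X$ on each copy; an operator $T$ on $l^2(X)$ is viewed as a map from the first to the second copy, with entries $T_{x'_2x_1}=\langle T\delta_{x_1},\delta_{x_2}\rangle$. $T$ has propagation less than $L$ w.r.t. $d$ if its entry vanishes whenever $d(x_1,x_2')\ge L$; $M_d(X,X)$ is the norm closure of bounded finite-propagation operators. $d^0\in D(X,X)$ is the metric with $d^0(x_1,x_2')=d_X(x_1,x_2)+1$; note $M_{d^0}(X,X)=C^*_u(X)$. *)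

(* Defs.v *)
From Stdlib Require Import Reals List Classical ClassicalEpsilon.
Import ListNotations.
Open Scope R_scope.

Definition C := (R * R)%type.
Definition C0 : C := (0, 0).
Definition C1 : C := (1, 0).
Definition Cadd (z w : C) : C := (fst z + fst w, snd z + snd w).
Definition Csub (z w : C) : C := (fst z - fst w, snd z - snd w).
Definition Cmul (z w : C) : C :=
  (fst z * fst w - snd z * snd w, fst z * snd w + snd z * fst w).
Definition Cnorm2 (z : C) : R := fst z * fst z + snd z * snd z.

Definition is_metric {T : Type} (m : T -> T -> R) : Prop :=
  (forall a b, 0 <= m a b) /\
  (forall a b, m a b = 0 <-> a = b) /\
  (forall a b, m a b = m b a) /\
  (forall a b c, m a c <= m a b + m b c).

Definition discrete_metric {T : Type} (m : T -> T -> R) : Prop :=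
  forall a, exists r, 0 < r /\ forall b, m a b < r -> b = a.

Definition countable_type (T : Type) : Prop :=
  exists enc : T -> nat, forall a b, enc a = enc b -> a = b.

(* D(X,X): metrics on X ⊔ X' (modelled as X + X, inl = first copy,
   inr = second copy X') restricting to dX on each copy. *)
Definition in_D {X : Type} (dX : X -> X -> R) (d : X + X -> X + X -> R) : Prop :=
  is_metric d /\
  (forall a b, d (inl a) (inl b) = dX a b) /\
  (forall a b, d (inr a) (inr b) = dX a b).

Definition d0 {X : Type} (dX : X -> X -> R) (p q : X + X) : R :=
  match p, q with
  | inl a, inl b => dX a b
  | inr a, inr b => dX a b
  | inl a, inr b => dX a b + 1
  | inr a, inl b => dX b a + 1
  end.

(* Operators on l^2(X) are represented by their matrices:
   T y x = <T delta_x, delta_y> = T_{y' x}. *)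
Definition matrix (X : Type) := X -> X -> C.

Definition sumR {A : Type} (l : list A) (f : A -> R) : R :=
  fold_right (fun a s => f a + s) 0 l.
Definition sumC {A : Type} (l : list A) (f : A -> C) : C :=
  fold_right (fun a s => Cadd (f a) s) C0 l.

(* The matrix M defines a bounded operator on l^2(X) of norm <= c:
   for every finitely supported vector f (supported on the duplicate-free
   list xs) and every finite set ys of output coordinates,
   sum_{y in ys} |(M f)(y)|^2 <= c^2 ||f||^2.
   (Finitely supported vectors are dense, so this is exactly ||M|| <= c.) *)
Definition op_norm_le {X : Type} (M : matrix X) (c : R) : Prop :=
  0 <= c /\
  forall (xs ys : list X) (f : X -> C), NoDup xs -> NoDup ys ->
    sumR ys (fun y => Cnorm2 (sumC xs (fun x => Cmul (M y x) (f x))))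
    <= c * c * sumR xs (fun x => Cnorm2 (f x)).

Definition bounded_op {X : Type} (M : matrix X) : Prop :=
  exists c, op_norm_le M c.

Definition propagation_lt {X : Type} (d : X + X -> X + X -> R)
    (T : matrix X) (L : R) : Prop :=
  forall x1 x2, L <= d (inl x1) (inr x2) -> T x2 x1 = C0.

Definition finite_propagation {X : Type} (d : X + X -> X + X -> R)
    (T : matrix X) : Prop :=
  exists L, propagation_lt d T L.

Definition idm {X : Type} : matrix X :=
  fun y x => if excluded_middle_informative (y = x) then C1 else C0.

Definition msub {X : Type} (A B : matrix X) : matrix X :=
  fun y x => Csub (A y x) (B y x).

Definition in_Md {X : Type} (d : X + X -> X + X -> R) (A : matrix X) : Prop :=
  forall eps, 0 < eps ->
    exists T, bounded_op T /\ finite_propagation d T /\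
      exists c, c < eps /\ op_norm_le (msub T A) c.

(* Main.v *)
Require Import Defs.
From Stdlib Require Import Reals Lra List.
Open Scope R_scope.

Theorem lemma4p1 (X : Type) (dX : X -> X -> R)
  (hmet : is_metric dX) (hdisc : discrete_metric dX) (hcount : countable_type X)
  (d : X + X -> X + X -> R) (hd : in_D dX d) (hid : in_Md d (@idm X)) :
  exists K, 0 <= K /\
    forall x1 x2 : X, Rabs (d (inl x1) (inr x2) - d0 dX (inl x1) (inr x2)) <= K.
Proof.
  destruct hd as [[hpos [hzero [hsym htri]]] [hl hr]].
  destruct (hid (1/2) ltac:(lra)) as [T [_ [[L HL] [c [Hc [Hc0 Hn]]]]]].
  assert (Hdiag : forall x, d (inl x) (inr x) < L).
  { intro x. destruct (Rlt_or_le (d (inl x) (inr x)) L) as [h|h]; [exact h|].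
    exfalso. specialize (HL x x h).
    specialize (Hn (x :: nil) (x :: nil) (fun _ => Defs.C1)).
    assert (ND : NoDup (x :: nil)) by (constructor; [intros []|constructor]).
    specialize (Hn ND ND).
    unfold sumR, sumC, msub, idm, Cnorm2, Cmul, Cadd, Csub, Defs.C1, C0 in Hn.
    simpl in Hn. rewrite HL in Hn.
    destruct (ClassicalEpsilon.excluded_middle_informative (x = x)) as [_|n]; [|now elim n].
    simpl in Hn. nra. }
  exists (Rabs L + 1). split.
  - pose proof (Rabs_pos L); lra.
  - intros x1 x2. simpl.
    pose proof (Rle_abs L).
    pose proof (Hdiag x2). pose proof (Hdiag x1).
    pose proof (htri (inl x1) (inr x2) (inl x2)) as t1.
    pose proof (htri (inl x1) (inl x1) (inr x2)) as t2.
    pose proof (htri (inl x1) (inr x1) (inr x2)) as t3.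
    rewrite hl in t1, t2. rewrite hr in t3.
    rewrite (hsym (inr x2) (inl x2)) in t1.
    apply Rabs_le. lra.
Qed.
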